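(* Let $X$ be an infinite set of integers. For all positive integers $h$ and $k$, \[ L_{X,h}(k) \subseteq L_{X,h}(k+1). \] If moreover $\mathbf{N}_0 = \{0,1,2,\ldots\} \subseteq X$, then \[ L_{X,h}(k) \subsetneq L_{X,h}(k+1). \]
   Context: For integers $a<b$, $[a,b]=\{j\in\mathbf{Z}: a\le j\le b\}$, and $[0,0]=\{0\}$. For a set $A$ of integers and a positive integer $h$, the $h$-fold sumset is $hA=\{a_1+\cdots+a_h : a_i\in A \text{ for all } i\}$ (summands not necessarily distinct). For a nonempty finite set $A$ of integers with $0\in hA$, $\ell_h(A)$ denotes the largest integer $n\ge 0$ such that $[0,n]\subseteq hA$ (so $\ell_h(A)=0$ if $0\in hA$ but $1\notin hA$); $\ell_h(A)$ is undefined if $0\notin hA$. For a nonempty set $X$ of integers, $\mathcal{A}_X(k)=\{A\subseteq X: |A|=k\}$, and $L_{X,h}(k)=\{\ell_h(A): A\in\mathcal{A}_X(k),\ \ell_h(A)\text{ defined}\}$. *)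

(* Defs.v *)
From mathcomp Require Import all_boot all_order all_algebra.
Set Implicit Arguments. Unset Strict Implicit. Unset Printing Implicit Defensive.
Import Order.TTheory GRing.Theory Num.Theory.
Local Open Scope ring_scope.

Definition infinite_set (X : int -> Prop) : Prop :=
  ~ (exists s : seq int, forall x, X x -> x \in s).

(* n belongs to the h-fold sumset hA: n = a_1 + ... + a_h with a_i in A
   (summands not necessarily distinct). A finite set is a duplicate-free seq. *)
Definition in_sumset (h : nat) (A : seq int) (n : int) : Prop :=
  exists s : seq int, size s = h /\ (forall a, a \in s -> a \in A) /\
    \sum_(a <- s) a = n.

Definition interval_in_sumset (h : nat) (A : seq int) (n : nat) : Prop :=
  forall j : nat, (j <= n)%N -> in_sumset h A j%:Z.

(* ell_is h A n  <->  ell_h(A) is defined and equals n: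
   n is the largest integer n >= 0 with [0,n] ⊆ hA
   (no such n exists exactly when 0 ∉ hA, i.e. ell_h(A) undefined). *)
Definition ell_is (h : nat) (A : seq int) (n : nat) : Prop :=
  interval_in_sumset h A n /\ (forall m : nat, interval_in_sumset h A m -> (m <= n)%N).

Definition in_calA (X : int -> Prop) (k : nat) (A : seq int) : Prop :=
  uniq A /\ size A = k /\ (forall a, a \in A -> X a).

Definition in_L (X : int -> Prop) (h k : nat) (n : nat) : Prop :=
  exists A : seq int, in_calA X k A /\ ell_is h A n.

(* Main.v *)
Require Import Defs.
From mathcomp Require Import all_boot all_order all_algebra zify.
From Stdlib Require Import Classical.
Set Implicit Arguments. Unset Strict Implicit. Unset Printing Implicit Defensive.
Import Order.TTheory GRing.Theory Num.Theory.
Local Open Scope ring_scope.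

Fixpoint allseqs (A : seq int) (h : nat) : seq (seq int) :=
  if h is h'.+1 then [seq a :: s | a <- A, s <- allseqs A h'] else [:: [::]].

Lemma size_allseqs A h : size (allseqs A h) = (size A ^ h)%N.
Proof. elim: h => [|h IH] //=. by rewrite size_allpairs IH expnS. Qed.

Lemma mem_allseqs A h s : size s = h -> (forall a, a \in s -> a \in A) ->
  s \in allseqs A h.
Proof.
elim: h s => [|h IH] [|a s] //= [Hs] HA.
apply: (allpairs_f (fun a s => a :: s)).
  by apply: HA; rewrite inE eqxx.
apply: IH => // b Hb; apply: HA; by rewrite inE Hb orbT.
Qed.

Lemma interval_bound h A m : interval_in_sumset h A m -> (m < size A ^ h)%N.
Proof.
move=> Hi.
have Hu : uniq (map Posz (iota 0 m.+1)).
  rewrite map_inj_uniq ?iota_uniq //. by move=> ? ? [].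
have Hsub : {subset map Posz (iota 0 m.+1) <= map (fun s => \sum_(a <- s) a) (allseqs A h)}.
  move=> z /mapP [j]; rewrite mem_iota add0n => Hj ->.
  have [s [Hs [HA Hsum]]] := Hi j Hj.
  rewrite -Hsum. apply: map_f. exact: mem_allseqs.
have := uniq_leq_size Hu Hsub.
by rewrite !size_map size_iota size_allseqs.
Qed.

Lemma interval_mono h A m j : interval_in_sumset h A m -> (j <= m)%N ->
  interval_in_sumset h A j.
Proof. move=> Hi Hj i Hi'. apply: Hi. exact: leq_trans Hi' Hj. Qed.

Lemma ell_exists h A n : interval_in_sumset h A n ->
  exists l, (n <= l)%N /\ ell_is h A l.
Proof.
move=> Hn.
have Hb := interval_bound Hn.
move: {2}(size A ^ h - n)%N (leqnn (size A ^ h - n)%N) => d.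
elim: d n Hn Hb => [|d IH] n Hn Hb Hd.
  exfalso. lia.
case: (classic (interval_in_sumset h A n.+1)) => H1.
  have [l [Hl He]] := IH n.+1 H1 (interval_bound H1) ltac:(lia).
  exists l; split => //; lia.
exists n; split => //; split => // m Hm.
case: (leqP m n) => // Hlt. exfalso; apply: H1. exact: interval_mono Hm Hlt.
Qed.

Lemma ell_not_next h A n : ell_is h A n -> ~ in_sumset h A (n.+1)%:Z.
Proof.
move=> [Hi Hmax] Hs.
have : interval_in_sumset h A n.+1.
  move=> j Hj. case: (leqP j n) => Hjn; first exact: Hi.
  have -> : j = n.+1 by lia. exact: Hs.
move/Hmax. lia.
Qed.

Lemma aux1 (x a M : int) : `|a| <= M -> - (`|x| * M) <= x * a.
Proof. case: (ler0P x) => Hx; case: (ler0P a) => Ha H; nia. Qed.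

Lemma key (x : int) (A : seq int) (M : int) (s : seq int) : 0 <= M -> (forall a, a \in A -> `|a| <= M) ->
  (forall b, b \in s -> b \in x :: A) ->
  x * \sum_(b <- s) b >= (if x \in s then x * x else 0) - `|x| * ((size s)%:Z * M).
Proof.
move=> HM0 HM. elim: s => [|a s IH] Hs.
  by rewrite big_nil /= mulr0 mul0r mulr0 subr0.
have Hs' : forall b, b \in s -> b \in x :: A by move=> b Hb; apply: Hs; rewrite inE Hb orbT.
have {IH}IH := IH Hs'.
have Hy : 0 <= `|x| by [].
have Hxx : 0 <= x * x by rewrite -expr2 sqr_ge0.
rewrite big_cons in_cons /= mulrDr.
rewrite mulrCA in IH. rewrite [`|x| * _]mulrCA. have Ht : 0 <= `|x| * M by rewrite mulr_ge0.
move: Ht IH; set t := `|x| * M => Ht IH.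
have Haux : forall a', a' \in A -> - t <= x * a' by move=> a' Ha'; apply: aux1; apply: HM.
clearbody t.
move: IH; set S := \sum_(b <- s) b => IH. clearbody S.
case: eqVneq => [<-|Hne] /=.
  case: (x \in s) in IH *; nia.
have HaA : a \in A.
  have := Hs a; rewrite !inE eqxx => /(_ isT) /orP [/eqP E|//].
  by rewrite E eqxx in Hne.
have := Haux a HaA.
case: (x \in s) in IH *; nia.
Qed.

Lemma aux2 (x n M h : int) : 0 <= M -> 0 <= h -> 0 <= n -> n + 1 + h * M < `|x| ->
  x * (n + 1) >= x * x - `|x| * (h * M) -> False.
Proof.
move=> H0 H1 H2 H3 H4.
case: (ler0P x) => Hx in H3 H4 *; nia.
Qed.

Lemma norm_le_sum (A : seq int) (a : int) : a \in A -> `|a| <= \sum_(b <- A) `|b|.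
Proof.
elim: A => [|b A IH] //=. rewrite in_cons big_cons => /orP [/eqP ->|Ha].
  by rewrite lerDl sumr_ge0.
apply: (le_trans (IH Ha)). by rewrite -[X in X <= _]add0r lerD2r.
Qed.

Lemma far_away (X : int -> Prop) (hX : infinite_set X) (B : int) :
  exists x, X x /\ B < `|x|.
Proof.
case: (classic (exists x, X x /\ B < `|x|)) => // Hno; exfalso; apply: hX.
exists [seq (i%:Z - B) | i <- iota 0 (2 * absz B).+1] => x Xx.
have Hx : `|x| <= B.
  case: (lerP `|x| B) => // H; exfalso; apply: Hno; by exists x.
apply/mapP; exists (absz (x + B)).
  rewrite mem_iota add0n. lia.
lia.
Qed.

Lemma ell_of h A n : interval_in_sumset h A n -> ~ in_sumset h A (n.+1)%:Z -> ell_is h A n.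
Proof.
move=> Hi Hn; split => // m Hm. case: (leqP m n) => // Hlt.
exfalso; apply: Hn. exact: Hm.
Qed.

Lemma interval_sub h (A A' : seq int) n : {subset A <= A'} ->
  interval_in_sumset h A n -> interval_in_sumset h A' n.
Proof.
move=> Hsub Hi j Hj. have [s [Hs [HA Hsum]]] := Hi j Hj.
exists s; split => //; split => // a Ha; apply: Hsub; exact: HA.
Qed.

Lemma part1 X (hX : infinite_set X) h k n (hh : (0 < h)%N) : in_L X h k n -> in_L X h k.+1 n.
Proof.
move=> [A [[HuA [HsA HXA]] He]].
set M : int := \sum_(b <- A) `|b|.
have HM : forall a : int, a \in A -> `|a| <= M by move=> a; apply: norm_le_sum.
have HM0 : 0 <= M by rewrite sumr_ge0.
clearbody M.
have [x [Xx Hx]] := far_away hX ((n.+1)%:Z + (h%:Z) * M).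
have HxA : x \notin A.
  apply/negP => /HM. have : 0 <= (h%:Z) * M by rewrite mulr_ge0. nia.
exists (x :: A); split.
  split; first by rewrite /= HxA HuA.
  split; first by rewrite /= HsA.
  move=> a; rewrite in_cons => /orP [/eqP ->|]; [exact: Xx|exact: HXA].
apply: ell_of.
  apply: interval_sub (proj1 He) => a Ha; by rewrite in_cons Ha orbT.
move=> [s [Hs [HA Hsum]]].
case: (boolP (x \in s)) => Hxs.
  have := key HM0 HM HA. rewrite Hxs Hsum Hs => Hk.
  apply: (@aux2 x (n%:Z) M h) => //.
    have E : (n%:Z + 1) = (n.+1)%:Z by rewrite -addn1 PoszD.
    by rewrite E.
  have E : (n%:Z + 1) = (n.+1)%:Z by rewrite -addn1 PoszD.
  by rewrite E.
apply: (ell_not_next He). exists s; split => //; split => // a Ha.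
have := HA a Ha; rewrite in_cons => /orP [/eqP E|//].
by rewrite -E Ha in Hxs.
Qed.

Lemma sum_neg (s : seq int) : s != [::] -> (forall a : int, a \in s -> a < 0) ->
  \sum_(a <- s) a < 0.
Proof.
elim: s => [|a s IH] // _ Hs. rewrite big_cons.
have Ha : a < 0 by apply: Hs; rewrite inE eqxx.
case: s IH Hs => [|b s] IH Hs; first by rewrite big_nil addr0.
have : \sum_(a <- b :: s) a < 0.
  apply: IH => // c Hc; apply: Hs; by rewrite inE Hc orbT.
move: Ha. set S := \sum_(_ <- _) _. clearbody S. lia.
Qed.

Lemma step X h k A m (hh : (0 < h)%N) (HN : forall m : nat, X (Posz m)) :
  in_calA X k A -> ell_is h A m -> exists m', (m < m')%N /\ in_L X h k.+1 m'.
Proof.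
move=> [HuA [HsA HXA]] He.
have [s [Hs [HA Hsum]]] := (proj1 He) 0%N (leq0n m).
have [a [Ha Ha0]] : exists a : int, a \in s /\ 0 <= a.
  case: (boolP (has (fun a : int => 0 <= a) s)) => [/hasP [a Ha Ha0]|Hn]; first by exists a.
  exfalso.
  have : \sum_(a <- s) a < 0.
    apply: sum_neg; first by case: s Hs {HA Hsum Hn} => //= Hs; rewrite -Hs in hh.
    move=> a Ha. rewrite ltNge. apply/negP => H. move/hasP: Hn; apply. by exists a.
  by rewrite Hsum.
case: a Ha Ha0 => [na|na] Ha Ha0 //.
set x : int := Posz (na + m.+1).
have Hperm := perm_to_rem Ha.
have Hsr : \sum_(b <- s) b = Posz na + \sum_(b <- rem (Posz na) s) b
  by rewrite (perm_big _ Hperm) big_cons.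
have Ht : in_sumset h (x :: A) (m.+1)%:Z.
  exists (x :: rem (Posz na) s); split.
    by rewrite /= size_rem // Hs prednK.
  split.
    move=> b; rewrite in_cons => /orP [/eqP ->|Hb]; first by rewrite inE eqxx.
    by rewrite in_cons (HA b (mem_rem Hb)) orbT.
  rewrite big_cons. move: Hsr; rewrite Hsum.
  set S := \sum_(_ <- _) _. clearbody S. rewrite /x. lia.
have HxA : x \notin A.
  apply/negP => HxA. apply: (ell_not_next He).
  move: Ht => [t [Ht1 [Ht2 Ht3]]]. exists t; split => //; split => // b Hb.
  have := Ht2 b Hb. rewrite in_cons => /orP [/eqP ->|] //.
have Hint : interval_in_sumset h (x :: A) m.+1.
  move=> j Hj. case: (leqP j m) => Hjm.
    have Hsub : {subset A <= x :: A} by move=> b Hb; rewrite in_cons Hb orbT.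
    exact: (interval_sub Hsub (proj1 He) Hjm).
  have E : j = m.+1 by lia.
  by rewrite E.
have [l [Hl Hel]] := ell_exists Hint.
exists l; split => //.
exists (x :: A); split => //.
split; first by rewrite /= HxA HuA.
split; first by rewrite /= HsA.
move=> b; rewrite in_cons => /orP [/eqP ->|]; [exact: HN|exact: HXA].
Qed.

Lemma Lk_nonempty X h k (hk : (0 < k)%N) (HN : forall m : nat, X (Posz m)) :
  exists n, in_L X h k n.
Proof.
set A0 := map Posz (iota 0 k).
have Hi : interval_in_sumset h A0 0.
  move=> j; rewrite leqn0 => /eqP ->.
  exists (nseq h 0); split; first by rewrite size_nseq.
  split.
    move=> a /nseqP [-> _]. apply/mapP; exists 0%N => //. by rewrite mem_iota.
  by rewrite big_nseq iter_addr_0 mul0rn.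
have [l [_ Hl]] := ell_exists Hi.
exists l, A0; split => //.
split; first by rewrite map_inj_uniq ?iota_uniq // => ? ? [].
split; first by rewrite size_map size_iota.
by move=> a /mapP [i _ ->].
Qed.

Lemma Lk_bound X h k n : in_L X h k n -> (n < k ^ h)%N.
Proof. move=> [A [[_ [HsA _]] [Hi _]]]. rewrite -HsA. exact: interval_bound Hi. Qed.

Close Scope ring_scope.

Theorem mainTheorem1 (X : int -> Prop) (hX : infinite_set X) (h k : nat)
    (hh : (0 < h)%N) (hk : (0 < k)%N) :
  (forall n : nat, in_L X h k n -> in_L X h k.+1 n) /\
  ((forall m : nat, X (Posz m)) ->
     (forall n : nat, in_L X h k n -> in_L X h k.+1 n) /\
     exists n : nat, in_L X h k.+1 n /\ ~ in_L X h k n).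
Proof.
have P1 : forall n : nat, in_L X h k n -> in_L X h k.+1 n.
  by move=> n; apply: part1.
split => // HN; split => //.
apply: NNPP => Hno.
have Hinc : forall n, in_L X h k.+1 n -> in_L X h k n.
  move=> n Hn. apply: NNPP => Hn'. apply: Hno. by exists n.
have Hgrow : forall j, exists n, (j <= n)%N /\ in_L X h k n.
  elim => [|j [n [Hjn Hn]]].
    have [n Hn] := Lk_nonempty h hk HN. by exists n.
  move: Hn => [A [HA He]].
  have [m' [Hm' Hl]] := step hh HN HA He.
  exists m'; split; first exact: leq_ltn_trans Hjn Hm'.
  exact: Hinc.
have [n [Hn HL]] := Hgrow (k ^ h)%N.
have := Lk_bound HL. rewrite ltnNge Hn. by [].
Qed.
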